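(* Let $q\in\Bbbk^\times$. (1) The linear map $\phi:D(q)\to D(q^{-1})$ with $\phi(e_1)=e_1$, $\phi(e_2)=e_2$, $\phi(a)=qa+(q-1)c$, $\phi(b)=qb$, $\phi(c)=c$, $\phi(d)=(q-1)b+d$ extends to an isomorphism. (2) The linear map $\psi:D(q)\to D(q)$ with $\psi(e_1)=e_2$, $\psi(e_2)=e_1$, $\psi(a)=qd$, $\psi(b)=a+c$, $\psi(c)=b$, $\psi(d)=a$ extends to an isomorphism.
   Context: $\Bbbk$ is an algebraically closed field of characteristic zero. Paths are written left to right. Let $Q$ be the quiver with vertices $e_1,e_2$, arrows $a,c:e_1\to e_2$ and $b,d:e_2\to e_1$; $D(q)=\Bbbk Q/(ab-(a+c)d,\ ba-q\,dc)$. *)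

(* Defs.v *)
From HB Require Import structures.
From mathcomp Require Import all_boot all_order all_algebra.
Set Implicit Arguments. Unset Strict Implicit. Unset Printing Implicit Defensive.
Import GRing.Theory.
Local Open Scope ring_scope.

Record gens (K : fieldType) (A : algType K) := Gens {
  ge1 : A; ge2 : A; ga : A; gb : A; gc : A; gd : A }.

Definition is_alg_hom (K : fieldType) (A B : algType K) (f : A -> B) : Prop :=
  [/\ forall (k : K) (x y : A), f (k *: x + y) = k *: f x + f y,
      forall x y : A, f (x * y) = f x * f y
    & f 1 = 1].

Definition is_alg_iso (K : fieldType) (A B : algType K) (f : A -> B) : Prop :=
  is_alg_hom f /\ bijective f.

(* The defining relations of D(q) = kQ/(ab-(a+c)d, ba-q dc), where Q has
   vertices e1,e2, arrows a,c : e1 -> e2, b,d : e2 -> e1, paths composed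
   left to right.  The first group is the standard presentation of the
   path algebra kQ (orthogonal idempotents summing to 1, each arrow
   alpha : i -> j satisfies e_i alpha = alpha = alpha e_j). *)
Definition Dq_rels (K : fieldType) (A : algType K) (q : K) (g : gens A) : Prop :=
  let: Gens e1 e2 a b c d := g in
  [/\ [/\ e1 * e1 = e1, e2 * e2 = e2, e1 * e2 = 0, e2 * e1 = 0 & e1 + e2 = 1],
      [/\ e1 * a = a, a * e2 = a, e1 * c = c & c * e2 = c],
      [/\ e2 * b = b, b * e1 = b, e2 * d = d & d * e1 = d]
    & a * b = (a + c) * d /\ b * a = q *: (d * c)].

Definition is_Dq (K : fieldType) (A : algType K) (q : K) (g : gens A) : Prop :=
  Dq_rels q g /\
  forall (B : algType K) (h : gens B), Dq_rels q h ->
    (exists f : A -> B, is_alg_hom f /\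
        f (ge1 g) = ge1 h /\ f (ge2 g) = ge2 h /\ f (ga g) = ga h /\
        f (gb g) = gb h /\ f (gc g) = gc h /\ f (gd g) = gd h) /\
    (forall f1 f2 : A -> B, is_alg_hom f1 -> is_alg_hom f2 ->
        f1 (ge1 g) = f2 (ge1 g) -> f1 (ge2 g) = f2 (ge2 g) -> f1 (ga g) = f2 (ga g) ->
        f1 (gb g) = f2 (gb g) -> f1 (gc g) = f2 (gc g) -> f1 (gd g) = f2 (gd g) ->
        f1 =1 f2).

(* Main.v *)
Require Import Defs.
From HB Require Import structures.
From mathcomp Require Import all_boot all_order all_algebra.
From mathcomp Require Import ring.
Import GRing.Theory.
Set Implicit Arguments. Unset Strict Implicit.
Local Open Scope ring_scope.

Section H.
Variable K : fieldType.

Lemma homD (A B : algType K) (f : A -> B) : is_alg_hom f ->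
  forall x y, f (x + y) = f x + f y.
Proof. by case=> L _ _ x y; have := L 1 x y; rewrite !scale1r. Qed.

Lemma hom0 (A B : algType K) (f : A -> B) : is_alg_hom f -> f 0 = 0.
Proof.
case=> L _ _; have := L 1 0 0; rewrite scale1r addr0 scale1r.
by move/(congr1 (fun z => z - f 0)); rewrite subrr addrK.
Qed.

Lemma homZ (A B : algType K) (f : A -> B) : is_alg_hom f ->
  forall k x, f (k *: x) = k *: f x.
Proof. move=> hf k x; have h0 := hom0 hf; case: hf => L _ _; have := L k x 0; by rewrite addr0 h0 addr0. Qed.

Lemma homB (A B : algType K) (f : A -> B) : is_alg_hom f ->
  forall x y, f (x - y) = f x - f y.
Proof. by move=> hf x y; rewrite (homD hf) -scaleN1r (homZ hf) scaleN1r. Qed.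

Lemma hom_comp (A B C : algType K) (f : A -> B) (k : B -> C) :
  is_alg_hom f -> is_alg_hom k -> is_alg_hom (k \o f).
Proof.
move=> [f1 f2 f3] [k1 k2 k3]; split=> /=.
- by move=> s x y; rewrite f1 k1.
- by move=> x y; rewrite f2 k2.
- by rewrite f3 k3.
Qed.

Lemma hom_id (A : algType K) : is_alg_hom (@id A).
Proof. by split. Qed.

Lemma bij_of (A A' : algType K) p g (hA : is_Dq p g) (f : A -> A') (k : A' -> A)
  (hf : is_alg_hom f) (hk : is_alg_hom k) :
  k (f (ge1 g)) = ge1 g -> k (f (ge2 g)) = ge2 g -> k (f (ga g)) = ga g ->
  k (f (gb g)) = gb g -> k (f (gc g)) = gc g -> k (f (gd g)) = gd g ->
  cancel f k.
Proof.
move=> h1 h2 h3 h4 h5 h6 x.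
have := (hA.2 A g hA.1).2 (k \o f) id (hom_comp hf hk) (@hom_id A).
by apply.
Qed.

Lemma phi_rels (A : algType K) (p : K) (hp : p != 0) (e1 e2 a b c d : A) :
  Dq_rels p^-1 (Gens e1 e2 a b c d) ->
  Dq_rels p (Gens e1 e2 (p *: a + (p - 1) *: c) (p *: b) c ((p - 1) *: b + d)).
Proof.
case=> [[E1 E2 E3 E4 E5] [A1 A2 C1 C2] [B1 B2 D1 D2] [Hab Hba]].
split => //.
- by split; rewrite ?mulrDr ?mulrDl -?scalerAr -?scalerAl ?A1 ?A2 ?C1 ?C2.
- by split; rewrite ?mulrDr ?mulrDl -?scalerAr -?scalerAl ?B1 ?B2 ?D1 ?D2.
split.
- have -> : p *: a + (p - 1) *: c + c = p *: (a + c).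
    by rewrite scalerBl scale1r -addrA subrK -scalerDr.
  rewrite -scalerAl mulrDr -scalerAr -Hab !mulrDl -!scalerAl -!scalerAr ?scalerA.
  by congr (p *: _); rewrite addrAC [(p - 1) *: (a * b)]scalerBl scale1r subrK.
- rewrite !mulrDr !mulrDl -!scalerAl -!scalerAr !scalerA Hba scalerA.
  rewrite scalerDr scalerA addrC.
  by congr (_ *: _ + _ *: _); field.
Qed.

Lemma psi_rels (A : algType K) (p : K) (e1 e2 a b c d : A) :
  Dq_rels p (Gens e1 e2 a b c d) ->
  Dq_rels p (Gens e2 e1 (p *: d) (a + c) b a).
Proof.
case=> [[E1 E2 E3 E4 E5] [A1 A2 C1 C2] [B1 B2 D1 D2] [Hab Hba]].
split => //.
- by split; rewrite // addrC.
- by split; rewrite ?mulrDr ?mulrDl -?scalerAr -?scalerAl ?A1 ?A2 ?C1 ?C2 ?D1 ?D2 ?B1 ?B2.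
- by split; rewrite ?mulrDr ?mulrDl -?scalerAr -?scalerAl ?A1 ?A2 ?C1 ?C2 ?D1 ?D2 ?B1 ?B2.
split.
- by rewrite mulrDl -!scalerAl Hba -scalerDr mulrDr.
- by rewrite -scalerAr Hab.
Qed.

Lemma psiinv_rels (A : algType K) (p : K) (hp : p != 0) (e1 e2 a b c d : A) :
  Dq_rels p (Gens e1 e2 a b c d) ->
  Dq_rels p (Gens e2 e1 d c (b - d) (p^-1 *: a)).
Proof.
case=> [[E1 E2 E3 E4 E5] [A1 A2 C1 C2] [B1 B2 D1 D2] [Hab Hba]].
split => //.
- by split; rewrite // addrC.
- by split; rewrite ?mulrBr ?mulrBl -?scalerAr -?scalerAl ?A1 ?A2 ?C1 ?C2 ?D1 ?D2 ?B1 ?B2.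
- by split; rewrite ?mulrBr ?mulrBl -?scalerAr -?scalerAl ?A1 ?A2 ?C1 ?C2 ?D1 ?D2 ?B1 ?B2.
split.
- by rewrite addrC subrK -scalerAr Hba scalerA mulVf // scale1r.
- by rewrite -scalerAl scalerA mulfV // scale1r mulrBr Hab mulrDl addrAC subrr add0r.
Qed.

Lemma comb1 (V : lmodType K) (p : K) (hp : p != 0) (x y : V) :
  p *: (p^-1 *: x + (p^-1 - 1) *: y) + (p - 1) *: y = x.
Proof.
rewrite scalerDr !scalerA -addrA -scalerDl.
have -> : p * p^-1 = 1 by field.
have -> : p * (p^-1 - 1) + (p - 1) = 0 by field.
by rewrite scale1r scale0r addr0.
Qed.

Lemma comb2 (V : lmodType K) (p : K) (hp : p != 0) (x y : V) :
  p^-1 *: (p *: x + (p - 1) *: y) + (p^-1 - 1) *: y = x.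
Proof.
rewrite scalerDr !scalerA -addrA -scalerDl.
have -> : p^-1 * p = 1 by field.
have -> : p^-1 * (p - 1) + (p^-1 - 1) = 0 by field.
by rewrite scale1r scale0r addr0.
Qed.

Lemma comb3 (V : lmodType K) (p : K) (hp : p != 0) (x y : V) :
  (p - 1) *: (p^-1 *: x) + ((p^-1 - 1) *: x + y) = y.
Proof.
rewrite scalerA addrA -scalerDl.
have -> : (p - 1) * p^-1 + (p^-1 - 1) = 0 by field.
by rewrite scale0r add0r.
Qed.

Lemma comb4 (V : lmodType K) (p : K) (hp : p != 0) (x y : V) :
  (p^-1 - 1) *: (p *: x) + ((p - 1) *: x + y) = y.
Proof.
rewrite scalerA addrA -scalerDl.
have -> : (p^-1 - 1) * p + (p - 1) = 0 by field.
by rewrite scale0r add0r.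
Qed.
End H.
Theorem lemma3p8 (K : closedFieldType) (charK0 : [pchar K] =i pred0)
  (q : K) (hq : q != 0)
  (A : algType K) (g : gens A) (hA : is_Dq q g)
  (A' : algType K) (g' : gens A') (hA' : is_Dq q^-1 g') :
  (exists phi : A -> A', is_alg_iso phi /\
     phi (ge1 g) = ge1 g' /\ phi (ge2 g) = ge2 g' /\
     phi (ga g) = q *: ga g' + (q - 1) *: gc g' /\
     phi (gb g) = q *: gb g' /\
     phi (gc g) = gc g' /\
     phi (gd g) = (q - 1) *: gb g' + gd g')
  /\
  (exists psi : A -> A, is_alg_iso psi /\
     psi (ge1 g) = ge2 g /\ psi (ge2 g) = ge1 g /\
     psi (ga g) = q *: gd g /\
     psi (gb g) = ga g + gc g /\
     psi (gc g) = gb g /\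
     psi (gd g) = ga g).
Proof.
case: g hA => e1 e2 a b c d hA; case: g' hA' => e1' e2' a' b' c' d' hA' /=.
have RA := hA.1; have RA' := hA'.1.
have hq' : q^-1 != 0 by rewrite invr_eq0.
split.
- have R1 := phi_rels hq RA'.
  have [[f [hf [f1 [f2 [fa [fb [fc fd]]]]]]] _] := hA.2 _ _ R1.
  have RA2 : Dq_rels (q^-1)^-1 (Gens e1 e2 a b c d) by rewrite invrK.
  have R2 := phi_rels hq' RA2.
  have [[k [hk [k1 [k2 [ka [kb [kc kd]]]]]]] _] := hA'.2 _ _ R2.
  simpl in *.
  exists f; split=> //; split=> //; exists k.
  + apply: (bij_of hA hf hk) => /=;
      rewrite ?f1 ?f2 ?fa ?fb ?fc ?fd ?(homD hk) ?(homZ hk) ?k1 ?k2 ?ka ?kb ?kc ?kd //.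
    * by rewrite comb1.
    * by rewrite scalerA mulfV // scale1r.
    * by rewrite comb3.
  + apply: (bij_of hA' hk hf) => /=;
      rewrite ?k1 ?k2 ?ka ?kb ?kc ?kd ?(homD hf) ?(homZ hf) ?f1 ?f2 ?fa ?fb ?fc ?fd //.
    * by rewrite comb2.
    * by rewrite scalerA mulVf // scale1r.
    * by rewrite comb4.
- have R1 := psi_rels RA.
  have [[f [hf [f1 [f2 [fa [fb [fc fd]]]]]]] _] := hA.2 _ _ R1.
  have R2 := psiinv_rels hq RA.
  have [[k [hk [k1 [k2 [ka [kb [kc kd]]]]]]] _] := hA.2 _ _ R2.
  simpl in *.
  exists f; split=> //; split=> //; exists k.
  + apply: (bij_of hA hf hk) => /=;
      rewrite ?f1 ?f2 ?fa ?fb ?fc ?fd ?(homD hk) ?(homZ hk) ?k1 ?k2 ?ka ?kb ?kc ?kd //.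
    * by rewrite scalerA mulfV // scale1r.
    * by rewrite addrC subrK.
  + apply: (bij_of hA hk hf) => /=;
      rewrite ?k1 ?k2 ?ka ?kb ?kc ?kd ?(homB hf) ?(homZ hf) ?f1 ?f2 ?fa ?fb ?fc ?fd //.
    * by rewrite addrC addKr.
    * by rewrite scalerA mulVf // scale1r.
Qed.
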